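(* For each positive integer $N$, let $$f(N)=\{\, y\in\mathbb{R} \;:\; y\equiv \sqrt{n} \pmod 1 \text{ for some } n\in\mathbb{N},\ n\le N,\ \sqrt{n}\notin\mathbb{N}\,\},$$ i.e. the set of fractional parts of $\sqrt{n}$ for the non-square $n\le N$, extended periodically with period $1$ to all reals with the same fractional parts. For a set $A\subset\mathbb{R}$ and $x\in\mathbb{R}$ define $$\operatorname{gap}_x(A)=\inf\{y\in A: y>x\}-\sup\{y\in A: y<x\},$$ and set $g(x,N)=\operatorname{gap}_x(f(N))$ and $G(x)=\lim_{N\to\infty}2\sqrt{N}\,g(x,N)$. Then $$G(x)=\begin{cases}2 & x\in\mathbb{Z},\\ \frac{2}{q} & x=\frac{p}{q},\ \gcd(p,q)=1,\ q\ge 2,\ q\equiv 0 \pmod 2,\\ \frac{1}{q} & x=\frac{p}{q},\ \gcd(p,q)=1,\ q\ge 2,\ q\equiv 1 \pmod 2,\\ 0 & x\notin\mathbb{Q}.\end{cases}$$ Equivalently, for $x=p/q$ in lowest terms with $q\ge 2$, $G(p/q)=\gcd(2,q)/q$.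
   Context: $\mathbb{N}$ denotes the positive integers. The fractional part of a real number $t$ is $t-\lfloor t\rfloor$. *)

(* Defs.v *)
From HB Require Import structures.
From mathcomp Require Import all_boot all_order all_algebra.
From mathcomp Require Import all_classical all_reals all_analysis.
Set Implicit Arguments. Unset Strict Implicit. Unset Printing Implicit Defensive.
Import Order.TTheory GRing.Theory Num.Theory.
Import numFieldNormedType.Exports.
Local Open Scope classical_set_scope.
Local Open Scope ring_scope.

Definition fsqrt (R : realType) (N : nat) : set R :=
  [set y : R | exists n : nat, [/\ (1 <= n)%N, (n <= N)%N,
     ~ (exists m : nat, Num.sqrt (n%:R : R) = m%:R) &
     exists k : int, y = Num.sqrt (n%:R : R) + k%:~R]].

Definition gap (R : realType) (x : R) (A : set R) : R :=
  inf [set y | A y /\ x < y] - sup [set y | A y /\ y < x].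

Definition gxN (R : realType) (x : R) (N : nat) : R := gap x (@fsqrt R N).

(* Main.v *)
Require Import Defs.
From HB Require Import structures.
From mathcomp Require Import all_boot all_order all_algebra.
From mathcomp Require Import all_classical all_reals all_analysis.
From mathcomp Require Import ring lra zify.
Import Order.TTheory GRing.Theory Num.Theory.
Import numFieldNormedType.Exports.
Local Open Scope classical_set_scope.
Local Open Scope ring_scope.
Lemma nt_bound (k r M S : int) : 0 <= r < M -> k = r + M * S ->
  (0 < k -> r <= k) /\ (k < 0 -> k <= - (M - r)).
Proof.
move=> /andP[r0 rM] ->.
have [S0|S0] := leP 0 S.
  have : 0 <= M * S by apply: mulr_ge0 => //; lia.
  move=> h; split => h1; lia.
have : M * S <= - M.
  have -> : - M = M * (-1) by ring.
  by apply: ler_wpM2l; lia.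
move=> h; split => h1; lia.
Qed.

Lemma cons_odd (p q k t u v : int) : p * p + k = q * t -> u * (2 * p) + v * q = 1 ->
  (p - t * u * q) * (p - t * u * q) + k = (t * v + t * t * u * u) * (q * q).
Proof.
move=> h1 h2.
apply/eqP; rewrite -subr_eq0; apply/eqP.
have -> : (p - t * u * q) * (p - t * u * q) + k - (t * v + t * t * u * u) * (q * q) =
  (p * p + k - q * t) + q * t * (1 - (u * (2 * p) + v * q)) by ring.
by rewrite h1 h2 !subrr mulr0 addr0.
Qed.

Lemma cons_even (p q k t u v : int) : p * p + k = 2 * q * t -> u * p + v * q = 1 ->
  (p - t * u * q) * (p - t * u * q) + k = (2 * t * v + t * t * u * u) * (q * q).
Proof.
move=> h1 h2.
apply/eqP; rewrite -subr_eq0; apply/eqP.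
have -> : (p - t * u * q) * (p - t * u * q) + k - (2 * t * v + t * t * u * u) * (q * q) =
  (p * p + k - 2 * q * t) + 2 * q * t * (1 - (u * p + v * q)) by ring.
by rewrite h1 h2 !subrr mulr0 addr0.
Qed.

Lemma gcd_bez (m n : int) : gcdz m n = 1 -> exists u v, u * m + v * n = 1.
Proof. by move=> h; have [u [v huv]] := Bezoutz m n; exists u, v; rewrite huv h. Qed.

Lemma coprime_z (p : int) (q : nat) : coprime `|p|%N q -> gcdz p q%:Z = 1.
Proof. by move=> /eqP h; rewrite /gcdz h. Qed.

Lemma coprime_z2 (p : int) (q : nat) : coprime `|p|%N q -> odd q -> gcdz (2 * p) q%:Z = 1.
Proof.
move=> h hq; apply: coprime_z; rewrite abszM /= coprimeMl h andbT.
by rewrite coprime2n.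
Qed.

Lemma not_dvd_sq (p : int) (q : nat) (D : int) : coprime `|p|%N q -> (2 <= q)%N ->
  - (p * p) <> D * q%:Z.
Proof.
move=> cop q2 h.
have : (q %| `|p| * `|p|)%N.
  have := congr1 absz h; rewrite abszN !abszM /= => ->.
  exact: dvdn_mull.
rewrite Gauss_dvdr; last by rewrite coprime_sym.
move=> /gcdn_idPl; rewrite gcdnC; move: cop => /eqP -> q1.
by move: q2; rewrite -q1.
Qed.
Section S.
Variable R : realType.
Implicit Types (x y : R) (A : set R).

Lemma gap_le x A y1 y2 : A y1 -> x < y1 -> A y2 -> y2 < x -> gap x A <= y1 - y2.
Proof.
move=> h1 l1 h2 l2; rewrite /gap; apply: lerB.
  apply: ge_inf; last by split.
  by exists x => z [_ /ltW].
apply: ub_le_sup; last by split.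
by exists x => z [_ /ltW].
Qed.

Lemma gap_ge x A y1 y2 a b : A y1 -> x < y1 -> A y2 -> y2 < x ->
  (forall y, A y -> x < y -> x + a <= y) ->
  (forall y, A y -> y < x -> y <= x - b) -> a + b <= gap x A.
Proof.
move=> h1 l1 h2 l2 Ha Hb; rewrite /gap.
have i1 : x + a <= inf [set y | A y /\ x < y].
  by apply: lb_le_inf; [exists y1 | move=> z [] /Ha H /H].
have i2 : sup [set y | A y /\ y < x] <= x - b.
  by apply: ge_sup; [exists y2 | move=> z [] /Hb H /H].
lra.
Qed.

Lemma sqrt_large (M : R) : 0 <= M -> \forall N \near \oo, M <= Num.sqrt (N%:R : R).
Proof.
move=> M0; near=> N.
have hN : M^+2 <= (N%:R : R) by near: N; apply: nbhs_infty_ger.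
by rewrite -(ger0_norm M0) -sqrtr_sqr ler_sqrt.
Unshelve. all: end_near.
Qed.

Lemma cvg_eps (u : nat -> R) (T : R) :
  (forall e : R, 0 < e -> exists S0 : R, forall N : nat, S0 <= Num.sqrt (N%:R : R) -> `|T - u N| <= e) ->
  u @ \oo --> T.
Proof.
move=> H; apply/cvgrPdist_le => e e0.
have [S0 HS] := H e e0.
near=> N.
have hN : `|S0| <= Num.sqrt (N%:R : R) by near: N; apply: sqrt_large.
apply: HS; apply: le_trans hN; exact: ler_norm.
Unshelve. all: end_near.
Qed.

Lemma cvg_rate (u : nat -> R) (T B S0 : R) :
  (forall N : nat, S0 <= Num.sqrt (N%:R : R) -> `|T - u N| <= B / Num.sqrt (N%:R : R)) ->
  u @ \oo --> T.
Proof.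
move=> H; apply: cvg_eps => e e0.
exists (`|S0| + `|B| / e + 1) => N hN.
have s0 : 0 < Num.sqrt (N%:R : R).
  apply: lt_le_trans hN; have := normr_ge0 S0; have : 0 <= `|B| / e by rewrite divr_ge0 // ltW.
  lra.
apply: le_trans (H N _) _.
  apply: le_trans hN; have := ler_norm S0; have : 0 <= `|B| / e by rewrite divr_ge0 // ltW. lra.
rewrite ler_pdivrMr //.
have hB : `|B| / e * e = `|B| by rewrite divfK // gt_eqF.
have := ler_norm B; have := normr_ge0 S0.
have : `|B| / e <= Num.sqrt (N%:R : R) - `|S0| - 1 by lra.
move=> h1 h2 h3.
have : `|B| / e * e <= (Num.sqrt (N%:R : R)) * e.
  apply: ler_wpM2r; [exact: ltW | lra].
rewrite hB. nra.
Qed.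

Lemma sqrt_approx (n c : R) : 1 <= c -> 0 <= n -> `|n - c^+2| <= c ->
  `|Num.sqrt n - c| <= `|n - c^+2| / (2*c - 1).
Proof.
move=> c1 n0 ec.
have hs : Num.sqrt n ^+ 2 = n by rewrite sqr_sqrtr.
have s0 := sqrtr_ge0 n.
set s := Num.sqrt n in hs s0 *.
have E : `|s - c| * (s + c) = `|n - c^+2|.
  rewrite -[s + c]ger0_norm; last lra.
  by rewrite -normrM; congr `|_|; rewrite -hs; ring.
have t0 := normr_ge0 (s - c).
have t1 : s - c <= `|s - c| by apply: ler_norm.
have t2 : c - s <= `|s - c| by rewrite distrC; apply: ler_norm.
set t := `|s - c| in E t0 t1 t2 *.
have t3 : t <= 1.
  have : t * c <= c by rewrite -E in ec; nra.
  nra.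
rewrite ler_pdivlMr; last lra.
have : t * (2*c-1) <= t * (s+c) by nra.
by rewrite E.
Qed.

Lemma sqrt_gt (n c : R) : 0 <= c -> 0 <= n -> 0 < n - c^+2 -> c < Num.sqrt n.
Proof.
move=> c0 n0 h.
have hs : Num.sqrt n ^+ 2 = n by rewrite sqr_sqrtr.
have s0 := sqrtr_ge0 n.
set s := Num.sqrt n in hs s0 *. nra.
Qed.

Lemma sqrt_lt (n c : R) : 0 <= c -> 0 <= n -> n - c^+2 < 0 -> Num.sqrt n < c.
Proof.
move=> c0 n0 h.
have hs : Num.sqrt n ^+ 2 = n by rewrite sqr_sqrtr.
have s0 := sqrtr_ge0 n.
set s := Num.sqrt n in hs s0 *. nra.
Qed.

Lemma sqrt_low (n c S : R) : 0 <= n -> 1 <= Num.sqrt n -> Num.sqrt n <= S ->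
  `|Num.sqrt n - c| < 1 -> `|n - c^+2| <= `|Num.sqrt n - c| * (2 * S + 1).
Proof.
move=> n0 s1 sS d1.
have hs : Num.sqrt n ^+ 2 = n by rewrite sqr_sqrtr.
set s := Num.sqrt n in hs s1 sS d1 *.
have -> : n - c^+2 = (s - c) * (2 * s - (s - c)) by rewrite -hs; ring.
rewrite normrM; apply: ler_wpM2l => //.
have t1 : s - c <= `|s - c| by apply: ler_norm.
have t2 : c - s <= `|s - c| by rewrite distrC; apply: ler_norm.
rewrite ger0_norm; lra.
Qed.

Lemma intr_nat (n : nat) : ((n%:Z)%:~R : R) = n%:R.
Proof. by []. Qed.

Lemma int_norm_ge1 (z : int) : z != 0 -> 1 <= `|z|.
Proof. move=> h; lia. Qed.

Lemma construct (P : int) (q : nat) (x : R) (k a0 d e : int) :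
  (0 < q)%N -> x = P%:~R / q%:R -> k != 0 ->
  a0 - P = d * q%:Z -> a0 * a0 + k = e * (q%:Z * q%:Z) ->
  forall N : nat, 2 + q%:R + `|k%:~R| <= Num.sqrt (N%:R : R) ->
  exists y, @fsqrt R N y /\ (0 < k -> x < y) /\ (k < 0 -> y < x) /\
    `|y - x| <= `|(k%:~R : R)| / ((q%:R)^+2 * (2 * Num.sqrt (N%:R : R) - 3 - 2 * q%:R)).
Proof.
move=> q0 hx k0 hd he N hN.
set Q : R := q%:R.
have Q1 : 1 <= Q by rewrite /Q ler1n.
set K : R := k%:~R.
set s := Num.sqrt (N%:R : R).
have K0 : 0 <= `|K| := normr_ge0 K.
have sN : s ^+ 2 = N%:R by rewrite sqr_sqrtr.
set w := Q * (s - 1).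
set t := Num.floor ((w - a0%:~R) / Q ^+ 2).
have /andP[ft1 ft2] := floor_itv ((w - a0%:~R) / Q ^+ 2).
rewrite -/t in ft1 ft2.
rewrite intrD in ft2.
have Q2 : 0 < Q ^+ 2 by apply: exprn_gt0; lra.
rewrite ler_pdivlMr // in ft1.
rewrite ltr_pdivrMr // in ft2.
set a : int := a0 + (q%:Z * q%:Z) * t.
have ha : (a%:~R : R) = a0%:~R + Q^+2 * t%:~R by rewrite /a intrD intrM intrM expr2.
set c : R := a%:~R / Q.
have hc : a%:~R = c * Q by rewrite /c divfK //; apply: lt0r_neq0; lra.
have c1 : c <= s - 1.
  have : c * Q <= (s - 1) * Q by rewrite -hc ha; rewrite /w in ft1; lra.
  rewrite ler_pM2r //; lra.
have c2 : s - 1 - Q < c.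
  have : (s - 1 - Q) * Q < c * Q.
    rewrite -hc ha; rewrite /w in ft2.
    have : Q * Q <= Q ^+2 by rewrite expr2.
    nra.
  rewrite ltr_pM2r //; lra.
set nz : int := e + 2 * a0 * t + (q%:Z * q%:Z) * t * t.
have hnz : a * a + k = nz * (q%:Z * q%:Z).
  rewrite /nz /a. have -> : k = e * (q%:Z * q%:Z) - a0 * a0 by rewrite -he; ring.
  ring.
have haP : a = P + d * q%:Z + q%:Z * q%:Z * t.
  by rewrite /a; have -> : a0 = P + d * q%:Z by rewrite -hd; ring.
clearbody a nz.
have hnzR : (nz%:~R : R) * Q^+2 = c^+2 * Q^+2 + K.
  have := congr1 (fun z : int => (z%:~R : R)) hnz.
  rewrite /= !(intrD, intrM) hc -/K => <-. rewrite expr2; ring.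
have Q0 : Q != 0 by apply: lt0r_neq0; lra.
set E := K / Q^+2.
have hE : E * Q^+2 = K by rewrite /E divfK // gt_eqF.
clearbody E.
have hEa : `|E| * Q^+2 = `|K|.
  by rewrite -hE normrM; congr (_ * _); rewrite ger0_norm // ltW.
have Q2' : 1 <= Q^+2 by rewrite expr_ge1 //; lra.
have E0 := normr_ge0 E.
have EK : `|E| <= `|K|.
  have : 0 <= `|E| * (Q^+2 - 1) by apply: mulr_ge0; lra.
  rewrite mulrBr mulr1 hEa subr_ge0. done.
have cK : 1 + `|K| < c by move: hN; rewrite -/Q -/K -/s; lra.
have nzpos : (0 : R) < nz%:~R.
  have : 0 < c^+2 * Q^+2 + K.
    have := ler_norm (-K); rewrite normrN.
    have : `|K| < c ^+ 2 by nra.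
    nra.
  by rewrite -hnzR pmulr_lgt0.
have nz0 : 0 < nz by rewrite -(ltr0z R).
set n := `|nz|%N.
have hn : (n%:R : R) = nz%:~R by rewrite -intr_nat /n gez0_abs // ltW.
have hnE : n%:R - c^+2 = E.
  apply: (mulIf (lt0r_neq0 Q2)). rewrite mulrBl hE hn hnzR; ring.
have s0 : 0 <= s := sqrtr_ge0 _.
have n1 : (1 <= n)%N by by rewrite -(ler_nat R) hn ler1z -gtz0_ge1.
have c0 : 0 <= c by lra.
have hN' : 2 + Q + `|K| <= s by move: hN; rewrite -/Q -/K -/s.
have nN : (n <= N)%N.
  rewrite -(ler_nat R) -sN.
  have : c^+2 <= (s-1)^+2 by nra.
  have : (s-1)^+2 = s^+2 - 2*s + 1 by ring.
  have := ler_norm E.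
  lra.
set j : int := - (d + q%:Z * t).
exists (Num.sqrt n%:R + j%:~R).
have hxQ : x * Q = P%:~R by rewrite hx divfK.
have hcQ : c * Q = P%:~R + d%:~R * Q + Q * Q * t%:~R.
  by rewrite -hc haP !(intrD, intrM).
have hyx : Num.sqrt n%:R + j%:~R - x = Num.sqrt n%:R - c.
  apply: (mulIf Q0); rewrite /j intrN intrD intrM -/Q. lra.
have n0 : (0 : R) <= n%:R by [].
have c1' : 1 <= c by lra.
have sa := @sqrt_approx n%:R c c1' n0.
rewrite hnE in sa.
have {sa}sa := sa ltac:(lra).
set dl := Num.sqrt n%:R - c in sa hyx *.
have D0 : 0 < 2*s - 3 - 2*Q by lra.
have dl0 := normr_ge0 dl.
have bnd : `|dl| * (2*s - 3 - 2*Q) * Q^+2 <= `|K|.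
  rewrite ler_pdivlMr in sa; last lra.
  have h1 : `|dl| * (2*s - 3 - 2*Q) <= `|dl| * (2 * c - 1) by apply: ler_wpM2l => //; lra.
  rewrite -hEa; apply: ler_wpM2r; [exact: ltW | lra].
have K0' : K != 0 by rewrite intr_eq0.
split.
  exists n; split => //; last by exists j.
  move=> [m hm].
  have hz : (((q%:Z * m%:Z) - a)%:~R : R) = Q * dl.
    rewrite /dl hm intrB intrM hc !intr_nat; ring.
  have dl0' : dl != 0.
    apply/eqP => h0.
    have : n%:R = c^+2.
      by rewrite -[n%:R]sqr_sqrtr // -/dl; have -> : Num.sqrt n%:R = c by rewrite /dl in h0; lra.
    move=> hnc; move: hnE; rewrite hnc subrr => hE0.
    by move: K0'; rewrite -hE -hE0 mul0r eqxx.
  have znz : ((q%:Z * m%:Z) - a) != 0.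
    by rewrite -(intr_eq0 R) hz mulf_neq0.
  have := @int_norm_ge1 _ znz.
  rewrite -(ler1z R) intr_norm hz normrM (ger0_norm (ltW (lt_le_trans ltr01 Q1))).
  move=> h1.
  have h2 : Q * `|dl| <= Q^+2 * `|dl| by rewrite expr2 -mulrA ler_peMl //; apply: mulr_ge0 => //; lra.
  have h3 : `|K| < 2*s - 3 - 2*Q by lra.
  nra.
split.
  move=> kp. have Kp : 0 < K by rewrite ltr0z.
  have Ep : 0 < E by rewrite -(pmulr_lgt0 _ Q2) hE.
  have := @sqrt_gt n%:R c c0 n0; rewrite hnE => /(_ Ep) => h.
  have : 0 < dl by rewrite /dl; lra.
  lra.
split.
  move=> kn. have Kn : K < 0 by rewrite ltrz0.
  have En : E < 0 by rewrite -(pmulr_llt0 _ Q2) hE.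
  have := @sqrt_lt n%:R c c0 n0; rewrite hnE => /(_ En) => h.
  have : dl < 0 by rewrite /dl; lra.
  lra.
rewrite hyx ler_pdivlMr; last by apply: mulr_gt0.
lra.
Qed.

Lemma lowerb (P : int) (q : nat) (x : R) (K1 K2 : int) :
  (0 < q)%N -> x = P%:~R / q%:R ->
  (forall (n : nat) (j : int), (0 < n)%N -> ~ (exists m : nat, Num.sqrt (n%:R : R) = m%:R) ->
     let k := n%:Z * (q%:Z * q%:Z) - (P - j * q%:Z) * (P - j * q%:Z) in
     (0 < k -> K1 <= k) /\ (k < 0 -> k <= - K2)) ->
  forall (N : nat) (y : R), (K1%:~R <= 2 * Num.sqrt (N%:R : R) + 1) ->
    (K2%:~R <= 2 * Num.sqrt (N%:R : R) + 1) -> @fsqrt R N y ->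
    (x < y -> x + K1%:~R / ((q%:R)^+2 * (2 * Num.sqrt (N%:R : R) + 1)) <= y) /\
    (y < x -> y <= x - K2%:~R / ((q%:R)^+2 * (2 * Num.sqrt (N%:R : R) + 1))).
Proof.
move=> q0 hx NT N y hK1 hK2 [n [n1 nN nsq [j hy]]].
set Q : R := q%:R.
have Q1 : 1 <= Q by rewrite /Q ler1n.
have Q0 : Q != 0 by apply: lt0r_neq0; lra.
have Q2 : 0 < Q ^+ 2 by apply: exprn_gt0; lra.
have Q2' : 1 <= Q^+2 by rewrite expr_ge1 //; lra.
set s := Num.sqrt (N%:R : R).
have s0 : 0 <= s := sqrtr_ge0 _.
set a : int := P - j * q%:Z.
have ha : (a%:~R : R) = P%:~R - j%:~R * Q by rewrite /a intrB intrM.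
set c : R := a%:~R / Q.
have hc : a%:~R = c * Q by rewrite /c divfK.
have hxQ : x * Q = P%:~R by rewrite hx divfK.
have hyx : y - x = Num.sqrt n%:R - c.
  apply: (mulIf Q0); rewrite hy; lra.
have [NT1 NT2] := NT n j n1 nsq.
set k := n%:Z * (q%:Z * q%:Z) - (P - j * q%:Z) * (P - j * q%:Z) in NT1 NT2.
have hk : (k%:~R : R) = Q^+2 * (n%:R - c^+2).
  have hu : P%:~R - j%:~R * Q = c * Q by rewrite -ha hc.
  rewrite /k !(intrB, intrM) !intr_nat -/Q hu expr2; ring.
have sn1 : 1 <= Num.sqrt (n%:R : R).
  have h1 : (1:R) <= n%:R by rewrite ler1n.
  by rewrite -[X in X <= _]sqrtr1 ler_sqrt // (le_trans ler01 h1).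
have snN : Num.sqrt (n%:R : R) <= s by rewrite ler_sqrt // ler_nat.
have hn2 : Num.sqrt (n%:R : R) ^+ 2 = n%:R by rewrite sqr_sqrtr.
set sn := Num.sqrt (n%:R : R) in sn1 snN hn2 hyx.
set dl := sn - c in hyx.
have D0 : 0 < Q^+2 * (2 * s + 1) by apply: mulr_gt0 => //; lra.
have hdl : n%:R - c^+2 = dl * (2 * sn - dl) by rewrite -hn2 /dl; ring.
split => hxy.
  have dp : 0 < dl by lra.
  suff : K1%:~R / (Q ^+ 2 * (2 * s + 1)) <= dl by lra.
  rewrite ler_pdivrMr //.
  have [dl1|dl1] := leP 1 dl.
    have : (2 * s + 1) <= Q^+2 * (2 * s + 1) by rewrite ler_peMl //; lra.
    have : Q ^+ 2 * (2 * s + 1) <= dl * (Q ^+ 2 * (2 * s + 1)) by rewrite ler_peMl //; lra.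
    move: hK1; rewrite -/s; lra.
  have kp : 0 < k.
    rewrite -(ltr0z R) hk; apply: mulr_gt0 => //; rewrite hdl; apply: mulr_gt0 => //; lra.
  have := NT1 kp; rewrite -(ler_int R) hk => h1.
  have := @sqrt_low n%:R c s (ler0n _ _) sn1 snN.
  rewrite -/sn -/dl (gtr0_norm dp) => /(_ ltac:(lra)).
  rewrite hdl (gtr0_norm); last by apply: mulr_gt0 => //; lra.
  move=> h2.
  have : Q^+2 * (dl * (2 * sn - dl)) <= Q^+2 * (dl * (2 * s + 1)) by apply: ler_wpM2l => //; lra.
  rewrite -hdl; lra.
have dn : dl < 0 by lra.
suff : K2%:~R / (Q ^+ 2 * (2 * s + 1)) <= - dl by lra.
rewrite ler_pdivrMr //.
have [dl1|dl1] := leP 1 (- dl).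
  have : (2 * s + 1) <= Q^+2 * (2 * s + 1) by rewrite ler_peMl //; lra.
  have : Q ^+ 2 * (2 * s + 1) <= - dl * (Q ^+ 2 * (2 * s + 1)) by rewrite ler_peMl //; lra.
  move: hK2; rewrite -/s; lra.
have kn : k < 0.
  rewrite -(ltrz0 R) hk pmulr_rlt0 // hdl pmulr_llt0 //; lra.
have := NT2 kn; rewrite -(ler_int R) hk intrN => h1.
have := @sqrt_low n%:R c s (ler0n _ _) sn1 snN.
rewrite -/sn -/dl (ltr0_norm dn) => /(_ ltac:(lra)).
rewrite hdl (ltr0_norm); last by rewrite pmulr_llt0 //; lra.
move=> h2.
have : Q^+2 * (- (dl * (2 * sn - dl))) <= Q^+2 * (- dl * (2 * s + 1)) by apply: ler_wpM2l => //; lra.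
rewrite -hdl; lra.
Qed.

Lemma rational_lim (P : int) (q : nat) (x : R) (K1 K2 : int) :
  (0 < q)%N -> x = P%:~R / q%:R -> 0 < K1 -> 0 < K2 ->
  (forall (n : nat) (j : int), (0 < n)%N -> ~ (exists m : nat, Num.sqrt (n%:R : R) = m%:R) ->
     let k := n%:Z * (q%:Z * q%:Z) - (P - j * q%:Z) * (P - j * q%:Z) in
     (0 < k -> K1 <= k) /\ (k < 0 -> k <= - K2)) ->
  (exists a0 d e, a0 - P = d * q%:Z /\ a0 * a0 + K1 = e * (q%:Z * q%:Z)) ->
  (exists a0 d e, a0 - P = d * q%:Z /\ a0 * a0 + (- K2) = e * (q%:Z * q%:Z)) ->
  (fun N : nat => 2 * Num.sqrt (N%:R : R) * gxN x N) @ \oo --> (((K1 + K2)%:~R : R) / (q%:R)^+2).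
Proof.
move=> q0 hx K1p K2p NT [a1 [d1 [e1 [hd1 he1]]]] [a2 [d2 [e2 [hd2 he2]]]].
set Q : R := q%:R.
have Q1 : 1 <= Q by rewrite /Q ler1n.
have Q2 : 0 < Q ^+ 2 by apply: exprn_gt0; lra.
set L : R := (K1 + K2)%:~R.
have hL : L = K1%:~R + K2%:~R by rewrite /L intrD.
have K1r : 0 < (K1%:~R : R) by rewrite ltr0z.
have K2r : 0 < (K2%:~R : R) by rewrite ltr0z.
apply: (@cvg_rate _ _ (L / Q^+2 * (3 + 2 * Q)) (2 + Q + K1%:~R + K2%:~R + (3 + 2 * Q))).
move=> N hN.
set s := Num.sqrt (N%:R : R) in hN *.
have s0 : 0 <= s := sqrtr_ge0 _.
have k1nz : K1 != 0 by rewrite gt_eqF.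
have k2nz : - K2 != 0 by rewrite oppr_eq0 gt_eqF.
have hs1 : 2 + q%:R + `|(K1%:~R : R)| <= s by rewrite gtr0_norm //; lra.
have hs2 : 2 + q%:R + `|((- K2)%:~R : R)| <= s by rewrite intrN normrN gtr0_norm //; lra.
have [y1 [A1 [xy1 [_ b1]]]] := @construct P q x K1 a1 d1 e1 q0 hx k1nz hd1 he1 N hs1.
have {}xy1 := xy1 K1p.
have [y2 [A2 [_ [xy2 b2]]]] := @construct P q x (- K2) a2 d2 e2 q0 hx k2nz hd2 he2 N hs2.
have {}xy2 := xy2 ltac:(by rewrite oppr_lt0).
rewrite -/s -/Q (gtr0_norm K1r) in b1.
rewrite -/s -/Q intrN normrN (gtr0_norm K2r) in b2.
set D := 2 * s - 3 - 2 * Q in b1 b2.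
have D0 : s <= D by rewrite /D; lra.
have Dp : 0 < Q^+2 * D by apply: mulr_gt0 => //; lra.
rewrite ler_pdivlMr // in b1. rewrite ler_pdivlMr // in b2.
have gu := @gap_le x (fsqrt N) y1 y2 A1 xy1 A2 xy2.
rewrite /gxN.
set G := gap x (fsqrt N) in gu *.
have up : G * (Q^+2 * D) <= L.
  have h1 : 0 <= y1 - x by lra.
  have h2 : 0 <= x - y2 by lra.
  rewrite ger0_norm // in b1. rewrite distrC ger0_norm // in b2.
  have : G * (Q ^+ 2 * D) <= (y1 - y2) * (Q^+2 * D) by apply: ler_wpM2r => //; lra.
  lra.
have lo : L <= G * (Q^+2 * (2 * s + 1)).
  have hk1 : (K1%:~R:R) <= 2 * s + 1 by lra.
  have hk2 : (K2%:~R:R) <= 2 * s + 1 by lra.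
  have Hb : forall y, fsqrt N y -> y < x -> y <= x - K2%:~R / (Q ^+ 2 * (2 * s + 1)).
    by move=> y Ay; have [_ ] := @lowerb P q x K1 K2 q0 hx NT N y hk1 hk2 Ay.
  have Ha : forall y, fsqrt N y -> x < y -> x + K1%:~R / (Q ^+ 2 * (2 * s + 1)) <= y.
    by move=> y Ay; have [] := @lowerb P q x K1 K2 q0 hx NT N y hk1 hk2 Ay.
  have := @gap_ge x (fsqrt N) y1 y2 _ _ A1 xy1 A2 xy2 Ha Hb.
  rewrite -/G -mulrDl -hL ler_pdivrMr //; apply: mulr_gt0 => //; lra.
have sp : 0 < s by lra.
set u := 2 * s * G * Q^+2 - L.
have key : `|u| * s <= L * (3 + 2 * Q).
  have h2s : 0 <= 2 * s by lra.
  have [hu|hu] := leP 0 u.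
    rewrite ger0_norm //.
    have h1 : 2 * s * (G * (Q ^+ 2 * D)) <= 2 * s * L by apply: ler_wpM2l.
    have h2 : u * s <= u * D by apply: ler_wpM2l.
    have h3 : u * D = 2 * s * (G * (Q ^+ 2 * D)) - L * D by rewrite /u; ring.
    rewrite /D in h3 h1 h2 *. lra.
  rewrite ltr0_norm //.
  have h1 : 2 * s * L <= 2 * s * (G * (Q ^+ 2 * (2 * s + 1))) by apply: ler_wpM2l.
  have h2 : - u * s <= - u * (2 * s + 1) by apply: ler_wpM2l; lra.
  have h3 : - u * (2 * s + 1) = L * (2 * s + 1) - 2 * s * (G * (Q ^+ 2 * (2 * s + 1))) by rewrite /u; ring.
  have h4 : 0 <= L * (2 * Q + 2) by apply: mulr_ge0; lra.
  lra.
have Q0 : Q^+2 != 0 by rewrite gt_eqF.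
have QQ0 : Q != 0 by rewrite gt_eqF //; lra.
have -> : L / Q ^+ 2 - 2 * s * G = - (u / Q^+2) by rewrite /u mulrBl mulfK //; ring.
rewrite normrN normrM [`|(Q^+2)^-1|]ger0_norm; last by rewrite invr_ge0 ltW.
rewrite ler_pdivlMr //.
have -> : `|u| * (Q ^+ 2)^-1 * s = (`|u| * s) * (Q ^+ 2)^-1 by ring.
have -> : L / Q ^+ 2 * (3 + 2 * Q) = (L * (3 + 2 * Q)) * (Q ^+ 2)^-1 by ring.
by apply: ler_wpM2r => //; rewrite invr_ge0 ltW.
Qed.

Lemma construct_irr (x d eta : R) (m n : int) (N : nat) :
  0 < d -> (forall z : int, d <= `|z%:~R - x|) -> 0 < eta <= 1 ->
  ((n%:~R : R) - (m%:~R + x)^+2) != 0 -> `|((n%:~R : R) - (m%:~R + x)^+2)| < eta ->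
  1 / d + 2 <= m%:~R + x -> m%:~R + x <= Num.sqrt (N%:R : R) - 1 ->
  exists y, @fsqrt R N y /\ (0 < ((n%:~R : R) - (m%:~R + x)^+2) -> x < y) /\
    (((n%:~R : R) - (m%:~R + x)^+2) < 0 -> y < x) /\
    `|y - x| <= eta / (2 * (m%:~R + x) - 1).
Proof.
move=> d0 hd /andP[e0 e1] enz elt c2 cs.
set c := m%:~R + x in enz elt c2 cs *.
set s := Num.sqrt (N%:R : R) in cs.
have s0 : 0 <= s := sqrtr_ge0 _.
have sN : s ^+ 2 = N%:R by rewrite sqr_sqrtr.
set e := n%:~R - c^+2 in enz elt.
have id0 : 0 < 1 / d by rewrite divr_gt0.
have cge : 2 <= c by lra.
have ee := ler_norm e.
have ee' : - e <= `|e| by rewrite -normrN ler_norm.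
have nge : (0 : R) < n%:~R.
  have : 4 <= c^+2 by nra.
  rewrite /e in ee ee'; lra.
have n0 : 0 < n by rewrite -(ltr0z R).
set nn := `|n|%N.
have hn : (nn%:R : R) = n%:~R by rewrite -intr_nat /nn gez0_abs // ltW.
have n1 : (1 <= nn)%N by rewrite -(ler_nat R) hn ler1z -gtz0_ge1.
have nN : (nn <= N)%N.
  rewrite -(ler_nat R) -sN hn.
  have : c^+2 <= (s-1)^+2 by nra.
  have : (s-1)^+2 = s^+2 - 2*s + 1 by ring.
  rewrite /e in ee; lra.
have c1 : 1 <= c by lra.
have nr0 : (0 : R) <= nn%:R by [].
have ne : nn%:R - c^+2 = e by rewrite hn.
have sa := @sqrt_approx nn%:R c c1 nr0.
rewrite ne in sa.
have {sa}sa := sa ltac:(lra).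
set dl := Num.sqrt nn%:R - c in sa.
have D0 : 0 < 2 * c - 1 by lra.
have bnd : `|dl| <= eta / (2 * c - 1).
  apply: (le_trans sa); apply: ler_wpM2r; [rewrite invr_ge0; exact: ltW | exact: ltW].
exists (Num.sqrt nn%:R + (- m)%:~R).
have hyx : Num.sqrt nn%:R + (- m)%:~R - x = dl by rewrite /dl /c intrN; ring.
rewrite hyx.
split.
  exists nn; split => //; last by exists (- m).
  move=> [z hz].
  have := hd (z%:Z - m); rewrite intrB intr_nat -hz.
  have -> : Num.sqrt nn%:R - m%:~R - x = dl by rewrite /dl /c; ring.
  move=> h1.
  have h2 : d * (2 * c - 1) > 1.
    have : d * (2 * c - 1) >= d * (2 / d + 3) by apply: ler_wpM2l; [exact: ltW | lra].
    have -> : d * (2 / d + 3) = 2 + 3 * d by field; exact: lt0r_neq0.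
    lra.
  have h3 : eta / (2 * c - 1) <= 1 / (2 * c - 1).
    by apply: ler_wpM2r; [rewrite invr_ge0; exact: ltW | done].
  have h4 : d <= 1 / (2 * c - 1) by lra.
  move: h4; rewrite ler_pdivlMr //; lra.
split.
  move=> ep. have := @sqrt_gt nn%:R c ltac:(lra) nr0; rewrite ne => /(_ ep).
  move: hyx; rewrite /dl; lra.
split => //.
move=> en. have := @sqrt_lt nn%:R c ltac:(lra) nr0; rewrite ne => /(_ en).
move: hyx; rewrite /dl; lra.
Qed.


Lemma irr_ne (x : R) : ~ (exists r : rat, x = ratr r) ->
  forall a b : int, b != 0 -> x * b%:~R != a%:~R.
Proof.
move=> H a b b0; apply/eqP => h; apply: H.
exists (a%:~R / b%:~R); rewrite fmorph_div !rmorph_int -h mulfK //.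
by rewrite intr_eq0.
Qed.

Lemma dist_int (x : R) : ~ (exists r : rat, x = ratr r) ->
  exists d : R, 0 < d /\ forall z : int, d <= `|z%:~R - x|.
Proof.
move=> H.
set f := Num.floor x.
have /andP[f1 f2] := floor_itv x.
rewrite -/f intrD in f1 f2.
have fx : x != f%:~R.
  by have := @irr_ne x H f 1 isT; rewrite mulr1.
have f1' : f%:~R < x by rewrite lt_neqAle eq_sym fx f1.
exists ((x - f%:~R) * (f%:~R + 1 - x)); split; first by apply: mulr_gt0; lra.
move=> z.
have [zf|zf] := lerP z f.
  have : (z%:~R : R) <= f%:~R by rewrite ler_int.
  move=> h; rewrite distrC ger0_norm; last lra.
  have : (x - f%:~R) * (f%:~R + 1 - x) <= (x - f%:~R) * 1 by apply: ler_wpM2l; lra.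
  lra.
have : (f + 1)%:~R <= (z%:~R : R) by rewrite ler_int; move: zf; clear; lia.
rewrite intrD => h; rewrite ger0_norm; last lra.
have : (x - f%:~R) * (f%:~R + 1 - x) <= 1 * (f%:~R + 1 - x) by apply: ler_wpM2r; lra.
lra.
Qed.

Lemma walk (x th eta : R) (h : nat) (b : int) (M : int) :
  th = h%:R * (2 * x) - b%:~R -> 0 < th -> th < eta ->
  (exists m n : int, M <= m /\ m%:~R <= M%:~R + (1 / th + 2) * h%:R /\
      0 < n%:~R - (m%:~R + x)^+2 /\ n%:~R - (m%:~R + x)^+2 < eta) /\
  (exists m n : int, M <= m /\ m%:~R <= M%:~R + (1 / th + 2) * h%:R /\
      n%:~R - (m%:~R + x)^+2 < 0 /\ - eta < n%:~R - (m%:~R + x)^+2).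
Proof.
move=> hth th0 the.
set s0 := (M%:~R + x)^+2.
set fl := Num.floor s0.
have /andP[fl1 fl2] := floor_itv s0.
rewrite -/fl intrD in fl1 fl2.
set fr := s0 - fl%:~R.
have fr0 : 0 <= fr by rewrite /fr; lra.
have fr1 : fr < 1 by rewrite /fr; lra.
set i0 := Num.ceil ((1 - fr) / th).
have /andP[ci1 ci2] := ceil_itv ((1 - fr) / th).
rewrite -/i0 intrB in ci1 ci2.
have thp : 0 < th := th0.
rewrite ltr_pdivlMr // in ci1. rewrite ler_pdivrMr // in ci2.
have i01 : 1 <= i0.
  have : 0 < (i0%:~R : R) * th by lra.
  by rewrite pmulr_lgt0 // ltr0z gtz0_ge1.
set Z := fun i : int => i * b + 2 * i * h%:Z * M + i * i * h%:Z * h%:Z.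
have key : forall i : int, ((M + i * h%:Z)%:~R + x)^+2 = s0 + i%:~R * th + (Z i)%:~R.
  move=> i; rewrite /s0 /Z hth !(intrD, intrM) !intr_nat; ring.
clearbody Z.
have hb : (1 / th) * th = 1 by rewrite mul1r mulVf // gt_eqF.
have i0b : (i0%:~R : R) <= 1 / th + 1.
  have : (i0%:~R - 1) * th <= (1 / th) * th by rewrite hb; lra.
  rewrite ler_pM2r //; lra.
have hR : (0 : R) <= h%:R by [].
split.
  exists (M + (i0 - 1) * h%:Z), (fl + Z (i0 - 1) + 1).
  rewrite key.
  have hm : 0 <= (i0 - 1) * h%:Z by apply: mulr_ge0 => //; rewrite subr_ge0.
  split; first by rewrite lerDl.
  rewrite !(intrD, intrM, intrB, intr_nat).
  split.
    have : (i0%:~R - 1) * h%:R <= (1 / th + 1) * h%:R by apply: ler_wpM2r => //; lra.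
    lra.
  rewrite /fr in ci1 ci2; split; lra.
have [g1|g1] := ltrP 1 (fr + i0%:~R * th).
  exists (M + i0 * h%:Z), (fl + Z i0 + 1).
  rewrite key.
  have hm : 0 <= i0 * h%:Z by apply: mulr_ge0 => //; exact: (le_trans ler01 i01).
  split; first by rewrite lerDl.
  rewrite !(intrD, intrM, intrB, intr_nat).
  split.
    have : i0%:~R * h%:R <= (1 / th + 1) * h%:R by apply: ler_wpM2r => //; lra.
    lra.
  rewrite /fr in ci1 ci2 g1; split; lra.
exists (M + (i0 + 1) * h%:Z), (fl + Z (i0 + 1) + 1).
rewrite key.
have hm : 0 <= (i0 + 1) * h%:Z by apply: mulr_ge0 => //; apply: addr_ge0 => //; exact: (le_trans ler01 i01).
  split; first by rewrite lerDl.
rewrite !(intrD, intrM, intrB, intr_nat).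
split.
  have : (i0%:~R + 1) * h%:R <= (1 / th + 2) * h%:R by apply: ler_wpM2r => //; lra.
  lra.
rewrite /fr in ci1 ci2 g1; split; lra.
Qed.


Lemma floor_close (a b : R) : Num.floor a = Num.floor b -> `|a - b| < 1.
Proof.
move=> e.
have /andP[a1 a2] := floor_itv a. have /andP[b1 b2] := floor_itv b.
rewrite e intrD in a1 a2. rewrite intrD in b2.
rewrite ltr_norml; apply/andP; split; lra.
Qed.

Lemma dirichlet (be : R) (K : nat) : (0 < K)%N ->
  exists i j : nat, (i < j)%N /\ (j <= K)%N /\
    `|(j%:R - i%:R) * be - (Num.floor (j%:R * be) - Num.floor (i%:R * be))%:~R| * K%:R < 1.
Proof.
case: K => // K' _.
set fr := fun i : nat => i%:R * be - (Num.floor (i%:R * be))%:~R.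
have fr01 : forall i, 0 <= fr i < 1.
  move=> i; have /andP[a1 a2] := floor_itv (i%:R * be).
  rewrite intrD in a2; rewrite /fr; apply/andP; split; lra.
set KR : R := K'.+1%:R.
have KR0 : 0 < KR by rewrite /KR ltr0n.
have fl0 : forall i, 0 <= Num.floor (KR * fr i).
  move=> i; rewrite floor_ge0; have /andP[h1 _] := fr01 i; apply: mulr_ge0 => //; exact: ltW.
have flK : forall i, (`|Num.floor (KR * fr i)| < K'.+1)%N.
  move=> i; rewrite -(ltr_nat R) -/KR.
  have -> : ((`|Num.floor (KR * fr i)|%N)%:R : R) = (Num.floor (KR * fr i))%:~R.
    by rewrite -intr_nat gez0_abs.
  have /andP[h1 h2] := fr01 i.
  apply: le_lt_trans (floor_le_tmp _) _.
  by rewrite -[X in _ < X]mulr1 ltr_pM2l.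
set g : 'I_K'.+2 -> 'I_K'.+1 := fun i => inord `|Num.floor (KR * fr i)|%N.
have ninj : ~ injective g.
  by move=> /leq_card; rewrite !card_ord ltnn.
have [i [j [gij nij]]] : exists i j, g i = g j /\ i != j.
  case: (pselect (exists i j, g i = g j /\ i != j)) => // Hn.
  exfalso; apply: ninj => i j gij; apply/eqP; apply/negPn/negP => nij.
  by apply: Hn; exists i, j.
have ef : Num.floor (KR * fr i) = Num.floor (KR * fr j).
  have := congr1 (@nat_of_ord _) gij; rewrite /g /= !inordK ?flK // => /(congr1 Posz).
  by rewrite !gez0_abs.
have cl := @floor_close _ _ ef.
rewrite -mulrBr normrM (gtr0_norm KR0) in cl.
have key : forall a b : nat, (a < b)%N -> (b <= K'.+1)%N -> `|fr b - fr a| * KR < 1 ->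
   exists i j : nat, (i < j)%N /\ (j <= K'.+1)%N /\
    `|(j%:R - i%:R) * be - (Num.floor (j%:R * be) - Num.floor (i%:R * be))%:~R| * K'.+1%:R < 1.
  move=> a b ab bK h; exists a, b; split => //; split => //.
  have -> : (b%:R - a%:R) * be - (Num.floor (b%:R * be) - Num.floor (a%:R * be))%:~R = fr b - fr a.
    by rewrite /fr intrB; ring.
  exact: h.
have iK := ltn_ord i. have jK := ltn_ord j.
have [ij|ji|ij] := ltngtP i j.
- by apply: (key _ _ ij jK); rewrite distrC mulrC.
- by apply: (key _ _ ji iK); rewrite mulrC.
- by move: nij; rewrite (val_inj ij) eqxx.
Qed.


Lemma small_pos (x eta : R) : ~ (exists r : rat, x = ratr r) -> 0 < eta ->
  exists (h : nat) (b : int), 0 < h%:R * (2 * x) - b%:~R /\ h%:R * (2 * x) - b%:~R < eta.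
Proof.
move=> H e0.
set c := Num.ceil (1 / eta).
have c0 : 0 <= c.
  rewrite /c ceil_ge0; have : 0 < 1 / eta by rewrite divr_gt0.
  lra.
have /andP[_ c2] := ceil_itv (1 / eta).
rewrite -/c in c2.
set K := (`|c|%N).+1.
have KR : (K%:R : R) = c%:~R + 1 by rewrite /K -addn1 natrD -intr_nat gez0_abs.
have Ke : 1 < K%:R * eta.
  rewrite KR mulrDl mul1r.
  have : 1 / eta * eta <= c%:~R * eta by apply: ler_wpM2r => //; exact: ltW.
  rewrite mul1r mulVf ?gt_eqF //; lra.
have [i [j [ij [jK hd]]]] := @dirichlet (2 * x) K isT.
set B := Num.floor (j%:R * (2 * x)) - Num.floor (i%:R * (2 * x)) in hd.
set h0 := (j - i)%N.
have h0R : (j%:R - i%:R : R) = h0%:R by rewrite /h0 natrB // ltnW.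
rewrite h0R in hd.
have h0p : (0 < h0)%N by rewrite /h0 subn_gt0.
set th0 := h0%:R * (2 * x) - B%:~R in hd.
have KR1 : (1 : R) <= K%:R by rewrite ler1n.
have thn : `|th0| < eta.
  have : `|th0| * K%:R < eta * K%:R by lra.
  by rewrite ltr_pM2r // ltr0n.
have th1 : `|th0| < 1.
  have : `|th0| <= `|th0| * K%:R by rewrite ler_peMr.
  lra.
have th0nz : th0 != 0.
  have := @irr_ne x H B (2 * h0%:Z) ltac:(by rewrite mulf_neq0 // lt0r_neq0 // ltz_nat).
  apply: contra => /eqP h; apply/eqP; rewrite intrM intr_nat /th0 in h *; lra.
have [tp|tn] := ltrP 0 th0.
  by exists h0, B; split => //; move: thn; rewrite gtr0_norm.
have tn' : th0 < 0 by rewrite lt_neqAle th0nz tn.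
set a := - th0.
have a0 : 0 < a by rewrite /a oppr_gt0.
have an : `|th0| = a by rewrite ltr0_norm.
rewrite an in thn th1.
set t := Num.floor (1 / a).
have /andP[t1 t2] := floor_itv (1 / a).
rewrite -/t intrD in t1 t2.
have ia : 1 < 1 / a by rewrite ltr_pdivlMr // mul1r.
have t0 : 0 <= t by rewrite /t floor_ge0; lra.
have ta1 : t%:~R * a <= 1 by move: t1; rewrite ler_pdivlMr.
have ta2 : 1 < (t%:~R + 1) * a by move: t2; rewrite ltr_pdivrMr.
exists (`|t|%N * h0)%N, (t * B - 1).
have -> : ((`|t|%N * h0)%N%:R : R) * (2 * x) - (t * B - 1)%:~R = t%:~R * th0 + 1.
  rewrite natrM -intr_nat gez0_abs // intrB intrM /th0; ring.
have thnz : t%:~R * th0 + 1 != 0.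
  have := @irr_ne x H (t * B - 1) (2 * (t * h0%:Z)).
  have tz : t != 0.
    apply/eqP => tz0; move: ta2; rewrite tz0 add0r mul1r; lra.
  move=> /(_ ltac:(by rewrite !mulf_neq0 // lt0r_neq0 // ltz_nat)).
  apply: contra => /eqP h; apply/eqP; rewrite !intrM intrB intr_nat /th0 in h *; lra.
rewrite /a in ta1 ta2 thn.
split.
  rewrite lt_neqAle eq_sym thnz /=. nra.
nra.
Qed.


Lemma irrational_lim (x : R) : ~ (exists r : rat, x = ratr r) ->
  (fun N : nat => 2 * Num.sqrt (N%:R : R) * gxN x N) @ \oo --> (0 : R).
Proof.
move=> H; apply: cvg_eps => ep ep0.
set eta := ep / (4 * (ep + 1)).
have he : eta * (4 * (ep + 1)) = ep by rewrite /eta divfK // gt_eqF //; lra.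
have eta0 : 0 < eta by rewrite /eta divr_gt0 //; lra.
have eta1 : eta <= 1 by nra.
have eta4 : 4 * eta <= ep by nra.
have [d [d0 hd]] := @dist_int x H.
have [h [b [th0 th1]]] := @small_pos x eta H eta0.
set th := h%:R * (2 * x) - b%:~R in th0 th1.
set Lw := (1 / th + 2) * h%:R.
have Lw0 : 0 <= Lw.
  apply: mulr_ge0 => //; have : 0 < 1 / th by rewrite divr_gt0.
  lra.
have id0 : 0 < 1 / d by rewrite divr_gt0.
exists (2 * Lw + 1 / d + 10) => N hN.
set s := Num.sqrt (N%:R : R) in hN *.
set M := Num.floor (s - 1 - x - Lw).
have /andP[fM1 fM2] := floor_itv (s - 1 - x - Lw).
rewrite -/M intrD in fM1 fM2.
have [[m1 [n1 [Mm1 [m1L [e1p e1l]]]]] [m2 [n2 [Mm2 [m2L [e2n e2l]]]]]] :=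
  @walk x th eta h b M erefl th0 th1.
rewrite -/Lw in m1L m2L.
have Mm1' : (M%:~R : R) <= m1%:~R by rewrite ler_int.
have Mm2' : (M%:~R : R) <= m2%:~R by rewrite ler_int.
have eta01 : 0 < eta <= 1 by rewrite eta0 eta1.
have cc1 : 1 / d + 2 <= m1%:~R + x by lra.
have cs1 : m1%:~R + x <= s - 1 by lra.
have cc2 : 1 / d + 2 <= m2%:~R + x by lra.
have cs2 : m2%:~R + x <= s - 1 by lra.
have [y1 [A1 [xy1 [_ b1]]]] := @construct_irr x d eta m1 n1 N d0 hd eta01
  (lt0r_neq0 e1p) ltac:(rewrite gtr0_norm //) cc1 cs1.
have {}xy1 := xy1 e1p.
have [y2 [A2 [_ [xy2 b2]]]] := @construct_irr x d eta m2 n2 N d0 hd eta01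
  (ltr0_neq0 e2n) ltac:(rewrite ltr0_norm //; lra) cc2 cs2.
have {}xy2 := xy2 e2n.
set Dd := 2 * s - 5 - 2 * Lw.
have Dd0 : s <= Dd by rewrite /Dd; lra.
have c1 : Dd <= 2 * (m1%:~R + x) - 1 by rewrite /Dd; lra.
have c2 : Dd <= 2 * (m2%:~R + x) - 1 by rewrite /Dd; lra.
rewrite ler_pdivlMr in b1; last lra.
rewrite ler_pdivlMr in b2; last lra.
have n1d : 0 <= `|y1 - x| := normr_ge0 _.
have n2d : 0 <= `|y2 - x| := normr_ge0 _.
have b1' : `|y1 - x| * Dd <= eta.
  apply: le_trans b1; apply: ler_wpM2l => //.
have b2' : `|y2 - x| * Dd <= eta.
  apply: le_trans b2; apply: ler_wpM2l => //.
rewrite gtr0_norm in b1'; last lra.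
rewrite distrC gtr0_norm in b2'; last lra.
have gu := @gap_le x (fsqrt N) y1 y2 A1 xy1 A2 xy2.
have gl := @gap_ge x (fsqrt N) y1 y2 0 0 A1 xy1 A2 xy2
   ltac:(by move=> y _ hy; rewrite addr0 ltW) ltac:(by move=> y _ hy; rewrite subr0 ltW).
rewrite /gxN.
set G := gap x (fsqrt N) in gu gl *.
rewrite addr0 in gl.
have s0 : 0 <= s := sqrtr_ge0 _.
have : G * Dd <= (y1 - y2) * Dd by apply: ler_wpM2r => //; lra.
have : s * G <= Dd * G by apply: ler_wpM2r.
move=> h1 h2.
rewrite sub0r normrN ger0_norm; last by apply: mulr_ge0 => //; lra.
lra.
Qed.

End S.






Theorem mainTheorem1 (R : realType) (x : R) :
  [/\ (forall k : int, x = k%:~R ->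
         (fun N : nat => 2 * Num.sqrt (N%:R : R) * gxN x N) @ \oo --> (2 : R)),
      (forall (p : int) (q : nat), coprime `|p|%N q -> (2 <= q)%N -> ~~ odd q ->
         x = p%:~R / q%:R ->
         (fun N : nat => 2 * Num.sqrt (N%:R : R) * gxN x N) @ \oo --> 2 / (q%:R : R)),
      (forall (p : int) (q : nat), coprime `|p|%N q -> (2 <= q)%N -> odd q ->
         x = p%:~R / q%:R ->
         (fun N : nat => 2 * Num.sqrt (N%:R : R) * gxN x N) @ \oo --> 1 / (q%:R : R)) &
      (~ (exists r : rat, x = ratr r) ->
         (fun N : nat => 2 * Num.sqrt (N%:R : R) * gxN x N) @ \oo --> (0 : R))].
Proof.
split.
- move=> k hx.
  have hx' : x = k%:~R / (1%:R) by rewrite hx divr1.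
  have NT : forall (n : nat) (j : int), (0 < n)%N -> ~ (exists m : nat, Num.sqrt (n%:R : R) = m%:R) ->
     let k0 := n%:Z * (1%:Z * 1%:Z) - (k - j * 1%:Z) * (k - j * 1%:Z) in
     (0 < k0 -> 1 <= k0) /\ (k0 < 0 -> k0 <= - 1).
    by move=> n j _ _ /=; split => h; lia.
  have := @rational_lim R k 1 x 1 1 isT hx' ltr01 ltr01 NT.
  have C1 : exists a0 d e : int, a0 - k = d * 1%:Z /\ a0 * a0 + 1 = e * (1%:Z * 1%:Z).
    by exists k, 0, (k * k + 1); rewrite subrr mul0r mulr1.
  have C2 : exists a0 d e : int, a0 - k = d * 1%:Z /\ a0 * a0 + (- 1) = e * (1%:Z * 1%:Z).
    by exists k, 0, (k * k - 1); rewrite subrr mul0r mulr1.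
  move=> /(_ C1 C2).
  have -> : (((1 + 1)%:~R : R) / (1%:R)^+2) = 2 by rewrite expr1n divr1.
  done.
- move=> p q cop q2 oq hx.
  have q0 : (0 < q)%N by apply: leq_trans q2.
  have qz : q%:Z != 0 by lia.
  have hq2 : q = ((q./2) * 2)%N by rewrite muln2 -[LHS]odd_double_half (negbTE oq).
  set h := q./2 in hq2. clearbody h.
  have hq : q%:Z = 2 * h%:Z by rewrite {1}hq2; lia.
  have qz2 : 2 * q%:Z != 0 by lia.
  have qp2 : 0 < 2 * q%:Z by lia.
  set r := ((- (p * p)) %% (2 * q%:Z))%Z.
  set Dq := ((- (p * p)) %/ (2 * q%:Z))%Z.
  have hr : - (p * p) = Dq * (2 * q%:Z) + r := divz_eq _ _.
  have r0 : 0 <= r := modz_ge0 _ qz2.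
  have rq : r < 2 * q%:Z := ltz_pmod _ qp2.
  clearbody r Dq.
  have op : odd `|p|%N.
    apply: contraLR cop; rewrite -dvdn2 => d2.
    have d2q : (2 %| q)%N by rewrite hq2 dvdn_mull.
    apply/negP => /eqP hg.
    by move: (dvdn_gcd 2 `|p| q); rewrite d2 d2q hg.
  have rnz : r != 0.
    apply/eqP => h0; move: hr; rewrite h0 addr0 => /(congr1 absz).
    rewrite abszN !abszM /= => hh.
    by move: op; rewrite -[odd _]andbb -oddM hh !oddM /= ?andbF.
  have [u [v huv]] := @gcd_bez _ _ (@coprime_z p q cop).
  have NT : forall (n : nat) (j : int), (0 < n)%N -> ~ (exists m : nat, Num.sqrt (n%:R : R) = m%:R) ->
     let k0 := n%:Z * (q%:Z * q%:Z) - (p - j * q%:Z) * (p - j * q%:Z) in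
     (0 < k0 -> r <= k0) /\ (k0 < 0 -> k0 <= - (2 * q%:Z - r)).
    move=> n j _ _ /=.
    apply: (@nt_bound _ r (2 * q%:Z) (Dq + p * j + h%:Z * (n%:Z - j * j))); first by apply/andP.
    apply/eqP; rewrite -subr_eq0; apply/eqP.
    have -> : n%:Z * (q%:Z * q%:Z) - (p - j * q%:Z) * (p - j * q%:Z) -
      (r + 2 * q%:Z * (Dq + p * j + h%:Z * (n%:Z - j * j))) = - (p * p) - (Dq * (2 * q%:Z) + r).
      by rewrite hq; ring.
    by rewrite -hr subrr.
  have rp : 0 < r by rewrite lt_neqAle eq_sym rnz.
  have K2p : 0 < 2 * q%:Z - r by rewrite subr_gt0.
  have := @rational_lim R p q x r (2 * q%:Z - r) q0 hx rp K2p NT.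
  have C1 : exists a0 d e : int, a0 - p = d * q%:Z /\ a0 * a0 + r = e * (q%:Z * q%:Z).
    exists (p - (- Dq) * u * q%:Z), (- (- Dq * u)), (2 * (- Dq) * v + (- Dq) * (- Dq) * u * u).
    split; first by ring.
    apply: (@cons_even _ _ _ _ _ _ _ huv).
    apply/eqP; rewrite -subr_eq0; apply/eqP.
    have -> : p * p + r - 2 * q%:Z * - Dq = - (- (p * p) - (Dq * (2 * q%:Z) + r)) by ring.
    by rewrite -hr subrr oppr0.
  have C2 : exists a0 d e : int, a0 - p = d * q%:Z /\ a0 * a0 + (- (2 * q%:Z - r)) = e * (q%:Z * q%:Z).
    exists (p - (- Dq - 1) * u * q%:Z), (- ((- Dq - 1) * u)), (2 * (- Dq - 1) * v + (- Dq - 1) * (- Dq - 1) * u * u).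
    split; first by ring.
    apply: (@cons_even _ _ _ _ _ _ _ huv).
    apply/eqP; rewrite -subr_eq0; apply/eqP.
    have -> : p * p + (- (2 * q%:Z - r)) - 2 * q%:Z * (- Dq - 1) = - (- (p * p) - (Dq * (2 * q%:Z) + r)) by ring.
    by rewrite -hr subrr oppr0.
  move=> /(_ C1 C2).
  have -> : r + (2 * q%:Z - r) = 2 * q%:Z by ring.
  have -> : (((2 * q%:Z)%:~R) : R) / (q%:R)^+2 = 2 / q%:R.
    rewrite intrM intr_nat; field.
    by rewrite pnatr_eq0 -lt0n.
  done.
- move=> p q cop q2 oq hx.
  have q0 : (0 < q)%N by apply: leq_trans q2.
  have qz : q%:Z != 0 by lia.
  have qp : 0 < q%:Z by lia.
  set r := ((- (p * p)) %% q%:Z)%Z.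
  set Dq := ((- (p * p)) %/ q%:Z)%Z.
  have hr : - (p * p) = Dq * q%:Z + r := divz_eq _ _.
  have r0 : 0 <= r := modz_ge0 _ qz.
  have rq : r < q%:Z := ltz_pmod _ qp.
  clearbody r Dq.
  have rnz : r != 0.
    apply/eqP => h0; apply: (@not_dvd_sq p q Dq cop q2); by rewrite hr h0 addr0.
  have [u [v huv]] := @gcd_bez _ _ (@coprime_z2 p q cop oq).
  have NT : forall (n : nat) (j : int), (0 < n)%N -> ~ (exists m : nat, Num.sqrt (n%:R : R) = m%:R) ->
     let k0 := n%:Z * (q%:Z * q%:Z) - (p - j * q%:Z) * (p - j * q%:Z) in
     (0 < k0 -> r <= k0) /\ (k0 < 0 -> k0 <= - (q%:Z - r)).
    move=> n j _ _ /=.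
    apply: (@nt_bound _ r q%:Z (Dq + n%:Z * q%:Z + 2 * p * j - j * j * q%:Z)); first by apply/andP.
    apply/eqP; rewrite -subr_eq0; apply/eqP.
    have -> : n%:Z * (q%:Z * q%:Z) - (p - j * q%:Z) * (p - j * q%:Z) -
      (r + q%:Z * (Dq + n%:Z * q%:Z + 2 * p * j - j * j * q%:Z)) = - (p * p) - (Dq * q%:Z + r) by ring.
    by rewrite -hr subrr.
  have rp : 0 < r by rewrite lt_neqAle eq_sym rnz.
  have K2p : 0 < q%:Z - r by rewrite subr_gt0.
  have := @rational_lim R p q x r (q%:Z - r) q0 hx rp K2p NT.
  have C1 : exists a0 d e : int, a0 - p = d * q%:Z /\ a0 * a0 + r = e * (q%:Z * q%:Z).
    exists (p - (- Dq) * u * q%:Z), (- (- Dq * u)), ((- Dq) * v + (- Dq) * (- Dq) * u * u).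
    split; first by ring.
    apply: (@cons_odd _ _ _ _ _ _ _ huv).
    apply/eqP; rewrite -subr_eq0; apply/eqP.
    have -> : p * p + r - q%:Z * - Dq = - (- (p * p) - (Dq * q%:Z + r)) by ring.
    by rewrite -hr subrr oppr0.
  have C2 : exists a0 d e : int, a0 - p = d * q%:Z /\ a0 * a0 + (- (q%:Z - r)) = e * (q%:Z * q%:Z).
    exists (p - (- Dq - 1) * u * q%:Z), (- ((- Dq - 1) * u)), ((- Dq - 1) * v + (- Dq - 1) * (- Dq - 1) * u * u).
    split; first by ring.
    apply: (@cons_odd _ _ _ _ _ _ _ huv).
    apply/eqP; rewrite -subr_eq0; apply/eqP.
    have -> : p * p + (- (q%:Z - r)) - q%:Z * (- Dq - 1) = - (- (p * p) - (Dq * q%:Z + r)) by ring.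
    by rewrite -hr subrr oppr0.
  move=> /(_ C1 C2).
  have -> : r + (q%:Z - r) = q%:Z by ring.
  have -> : ((q%:Z)%:~R : R) / (q%:R)^+2 = 1 / q%:R.
    rewrite intr_nat; field.
    by rewrite pnatr_eq0 -lt0n.
  done.
- exact: (@irrational_lim R x).
Qed.
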